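(* Let $f:\mathbb{R}^{n_0}\to\mathbb{R}^{n_m}$ be an $m$-layer ReLU network with weights $\mathbf{W}^{(k)}$ and biases $\bm{b}^{(k)}$, let $\bm{x}_0\in\mathbb{R}^{n_0}$, $p\in[1,\infty]$, $\epsilon>0$, and let $\bm{l}^{(k)},\bm{u}^{(k)}$, $k\in[m-1]$, be valid pre-ReLU activation bounds on $B_p(\bm{x}_0,\epsilon)$ as described below. For each $j\in[n_m]$ define $$\gamma^L_j=\mu^-_j+\nu_j-\epsilon\|\mathbf{A}^{(0)}_{j,:}\|_q,\qquad \gamma^U_j=\mu^+_j+\nu_j+\epsilon\|\mathbf{A}^{(0)}_{j,:}\|_q,$$ where $1/p+1/q=1$, $\mu^+_j=-\sum_{k=1}^{m-1}\mathbf{A}^{(k)}_{j,:}\mathbf{T}^{(k)}_{:,j}$, $\mu^-_j=-\sum_{k=1}^{m-1}\mathbf{A}^{(k)}_{j,:}\mathbf{H}^{(k)}_{:,j}$ and $\nu_j=\mathbf{A}^{(0)}_{j,:}\bm{x}_0+\bm{b}^{(m)}_j+\sum_{k=1}^{m-1}\mathbf{A}^{(k)}_{j,:}\bm{b}^{(k)}$. Then for every $j\in[n_m]$, $\gamma^L_j\le f_j(\bm{x})\le\gamma^U_j$ for all $\bm{x}\in B_p(\bm{x}_0,\epsilon)$.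
   Context: Network: $\phi_0(\bm{x})=\bm{x}$; for $k\in[m-1]$, $\phi_k(\bm{x})=\sigma(\mathbf{W}^{(k)}\phi_{k-1}(\bm{x})+\bm{b}^{(k)})$, $\mathbf{W}^{(k)}\in\mathbb{R}^{n_k\times n_{k-1}}$, $\bm{b}^{(k)}\in\mathbb{R}^{n_k}$, $\sigma(\bm{y})=\max(\bm{y},\bm{0})$ elementwise; $f(\bm{x})=\mathbf{W}^{(m)}\phi_{m-1}(\bm{x})+\bm{b}^{(m)}$. $B_p(\bm{x}_0,\epsilon)=\{\bm{x}:\|\bm{x}-\bm{x}_0\|_p\le\epsilon\}$. Standing assumption: for each $k\in[m-1]$, $r\in[n_k]$, $\bm{l}^{(k)}_r\le\bm{u}^{(k)}_r$ and $\bm{l}^{(k)}_r\le\mathbf{W}^{(k)}_{r,:}\phi_{k-1}(\bm{x})+\bm{b}^{(k)}_r\le\bm{u}^{(k)}_r$ for all $\bm{x}\in B_p(\bm{x}_0,\epsilon)$. Index sets: $\mathcal{I}^+_k=\{r:\bm{u}^{(k)}_r\ge\bm{l}^{(k)}_r\ge0\}$, $\mathcal{I}^-_k=\{r:\bm{l}^{(k)}_r\le\bm{u}^{(k)}_r\le0\}$, $\mathcal{I}_k=\{r:\bm{l}^{(k)}_r<0<\bm{u}^{(k)}_r\}$. $\mathbf{D}^{(0)}=I_{n_0}$; for $k\in[m-1]$, $\mathbf{D}^{(k)}$ is diagonal $n_k\times n_k$ with $\mathbf{D}^{(k)}_{r,r}=\frac{\bm{u}^{(k)}_r}{\bm{u}^{(k)}_r-\bm{l}^{(k)}_r}$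 if $r\in\mathcal{I}_k$, $1$ if $r\in\mathcal{I}^+_k$, $0$ if $r\in\mathcal{I}^-_k$. $\mathbf{A}^{(m-1)}=\mathbf{W}^{(m)}\mathbf{D}^{(m-1)}$ and for $k=m-1,\dots,1$, $\mathbf{A}^{(k-1)}=\mathbf{A}^{(k)}\mathbf{W}^{(k)}\mathbf{D}^{(k-1)}$. For $k\in[m-1]$, $\mathbf{T}^{(k)},\mathbf{H}^{(k)}\in\mathbb{R}^{n_k\times n_m}$ with $\mathbf{T}^{(k)}_{r,j}=\bm{l}^{(k)}_r$ if $r\in\mathcal{I}_k$ and $\mathbf{A}^{(k)}_{j,r}>0$ (else $0$), and $\mathbf{H}^{(k)}_{r,j}=\bm{l}^{(k)}_r$ if $r\in\mathcal{I}_k$ and $\mathbf{A}^{(k)}_{j,r}<0$ (else $0$). *)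

(* Defs.v *)
From HB Require Import structures.
From mathcomp Require Import all_boot all_order all_algebra.
From mathcomp Require Import reals ereal exp.
Set Implicit Arguments. Unset Strict Implicit. Unset Printing Implicit Defensive.
Import Order.TTheory GRing.Theory Num.Theory.
Local Open Scope ring_scope.

Section Defs.
Variable R : realType.

Definition lpnorm (p : \bar R) (k : nat) (v : 'I_k -> R) : R :=
  match p with
  | +oo%E => \big[Num.max/0]_(i < k) `|v i|
  | (r%:E)%E => (\sum_(i < k) (`|v i| `^ r)) `^ (r^-1)
  | -oo%E => 0
  end.

(* Hoelder conjugate exponent q of p (1/p + 1/q = 1), for p in [1, +oo]. *)
Definition hconj (p : \bar R) : \bar R :=
  match p with
  | +oo%E => 1%:E
  | (r%:E)%E => if r == 1 then +oo%E else (r / (r - 1))%:E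
  | -oo%E => 1%:E
  end.

Definition relu (k : nat) (y : 'cV[R]_k) : 'cV[R]_k :=
  \col_i Num.max (y i 0) 0.

(* Network with dimensions n 0, ..., n M.+1 (i.e. m = M+1 layers).
   W k, b k are the paper's W^{(k+1)}, b^{(k+1)}. *)
Variables (n : nat -> nat)
  (W : forall k : nat, 'M[R]_(n k.+1, n k))
  (b : forall k : nat, 'cV[R]_(n k.+1)).

Fixpoint phi (k : nat) (x : 'cV[R]_(n 0)) : 'cV[R]_(n k) :=
  match k as k0 return 'cV[R]_(n k0) with
  | 0 => x
  | k'.+1 => relu (W k' *m phi k' x + b k')
  end.

Definition netf (M : nat) (x : 'cV[R]_(n 0)) : 'cV[R]_(n M.+1) :=
  W M *m phi M x + b M.

Definition ballp (p : \bar R) (x0 : 'cV[R]_(n 0)) (eps : R) (x : 'cV[R]_(n 0)) :=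
  lpnorm p (fun i => x i 0 - x0 i 0) <= eps.

Variables (l u : forall k : nat, 'cV[R]_(n k)).

Definition in_Iplus (k : nat) (r : 'I_(n k)) := 0 <= l k r 0.
Definition in_Iminus (k : nat) (r : 'I_(n k)) := u k r 0 <= 0.
Definition in_Iamb (k : nat) (r : 'I_(n k)) := (l k r 0 < 0) && (0 < u k r 0).

Definition Dmat (k : nat) : 'M[R]_(n k) :=
  match k as k0 return 'M[R]_(n k0) with
  | 0 => 1%:M
  | k'.+1 => diag_mx (\row_r
      (if in_Iamb r then u k'.+1 r 0 / (u k'.+1 r 0 - l k'.+1 r 0)
       else if in_Iplus r then 1 else 0))
  end.

Variable (m : nat) (A : forall k : nat, 'M[R]_(n m, n k)).

Definition Tmat (k : nat) : 'M[R]_(n k, n m) :=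
  \matrix_(r, j) (if in_Iamb r && (0 < A k j r) then l k r 0 else 0).
Definition Hmat (k : nat) : 'M[R]_(n k, n m) :=
  \matrix_(r, j) (if in_Iamb r && (A k j r < 0) then l k r 0 else 0).

End Defs.

(* Main.v *)
Require Import Defs.
From HB Require Import structures.
From mathcomp Require Import all_boot all_order all_algebra.
From mathcomp Require Import reals ereal exp.
From mathcomp Require Import ring lra zify.
Set Implicit Arguments. Unset Strict Implicit. Unset Printing Implicit Defensive.
Import Order.TTheory GRing.Theory Num.Theory.
Local Open Scope ring_scope.

Section H.
Variable R : realType.

Lemma invpowR (x r : R) : 0 <= x -> (x^-1) `^ r = (x `^ r)^-1.
Proof.
move=> x0; rewrite -powR_inv1 // powRAC powR_inv1 //; exact: powR_ge0.
Qed.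

Lemma norm_eq0 k (a : 'I_k -> R) (q : R) : 0 < q ->
  (\sum_i `|a i| `^ q) `^ q^-1 = 0 -> forall i, a i = 0.
Proof.
move=> q0 /powR_eq0_eq0 S0 i.
have := psumr_eq0P (P := predT) (fun i _ => powR_ge0 `|a i| q) S0 (i:=i) isT.
by move/powR_eq0_eq0/normr0_eq0.
Qed.

Lemma powR_norm_pow k (a : 'I_k -> R) (q : R) : 0 < q ->
  ((\sum_i `|a i| `^ q) `^ q^-1) `^ q = \sum_i `|a i| `^ q.
Proof.
move=> q0; rewrite -powRrM mulVf ?gt_eqF // powRr1 //.
by apply: sumr_ge0 => i _; exact: powR_ge0.
Qed.

Lemma hoelder_fin k (a d : 'I_k -> R) (p q : R) : 0 < p -> 0 < q ->
  p^-1 + q^-1 = 1 ->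
  \sum_i `|a i| * `|d i| <=
  (\sum_i `|a i| `^ q) `^ q^-1 * (\sum_i `|d i| `^ p) `^ p^-1.
Proof.
move=> p0 q0 pq.
have [NA0|NA0] := eqVneq ((\sum_i `|a i| `^ q) `^ q^-1) 0.
  rewrite NA0 mul0r big1 // => i _.
  by rewrite (norm_eq0 q0 NA0 i) normr0 mul0r.
have [ND0|ND0] := eqVneq ((\sum_i `|d i| `^ p) `^ p^-1) 0.
  rewrite ND0 mulr0 big1 // => i _.
  by rewrite (norm_eq0 p0 ND0 i) normr0 mulr0.
have NAq := powR_norm_pow a q0.
have NDq := powR_norm_pow d p0.
move: NA0 ND0 NAq NDq.
have := powR_ge0 (\sum_i `|a i| `^ q) q^-1.
have := powR_ge0 (\sum_i `|d i| `^ p) p^-1.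
move: ((\sum_i `|a i| `^ q) `^ q^-1) => NA.
move: ((\sum_i `|d i| `^ p) `^ p^-1) => ND.
move=> ND_ge0 NA_ge0 NA0 ND0 NAq NDq.
have NAp : 0 < NA by rewrite lt0r NA0.
have NDp : 0 < ND by rewrite lt0r ND0.
have young : forall i, (`|a i| / NA) * (`|d i| / ND) <=
    (`|a i| / NA) `^ q / q + (`|d i| / ND) `^ p / p.
  move=> i; apply: conjugate_powR => //.
  - exact: divr_ge0 (normr_ge0 (a i)) (ltW NAp).
  - exact: divr_ge0 (normr_ge0 (d i)) (ltW NDp).
  by rewrite addrC.
have hA : forall i, (`|a i| / NA) `^ q = `|a i| `^ q / \sum_i `|a i| `^ q.
  move=> i; rewrite (powRM _ (normr_ge0 _)); last by rewrite invr_ge0.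
  by rewrite (invpowR _ NA_ge0) NAq.
have hD : forall i, (`|d i| / ND) `^ p = `|d i| `^ p / \sum_i `|d i| `^ p.
  move=> i; rewrite (powRM _ (normr_ge0 _)); last by rewrite invr_ge0.
  by rewrite (invpowR _ ND_ge0) NDq.
have SA0 : \sum_i `|a i| `^ q != 0 by rewrite -NAq powR_eq0 (negbTE NA0).
have SD0 : \sum_i `|d i| `^ p != 0 by rewrite -NDq powR_eq0 (negbTE ND0).
have key : \sum_i (`|a i| / NA) * (`|d i| / ND) <= 1.
  apply: le_trans (ler_sum _ (fun i _ => young i)) _.
  rewrite big_split /=.
  rewrite (eq_bigr _ (fun i _ => congr1 (fun t => t / q) (hA i))).
  rewrite (eq_bigr _ (fun i _ => congr1 (fun t => t / p) (hD i))).
  rewrite -!mulr_suml.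
  by rewrite !mulfV // !mul1r addrC pq.
have e : \sum_i (`|a i| / NA) * (`|d i| / ND) = (\sum_i `|a i| * `|d i|) / (NA * ND).
  rewrite mulr_suml; apply: eq_bigr => i _.
  by rewrite invfM; ring.
by rewrite e ler_pdivrMr ?mulr_gt0 // mul1r in key.
Qed.

Lemma sum_abs_bound k (a d : 'I_k -> R) :
  `|\sum_i a i * d i| <= \sum_i `|a i| * `|d i|.
Proof.
apply: le_trans (ler_norm_sum _ _ _) _.
by apply: ler_sum => i _; rewrite normrM.
Qed.

Lemma sum_powR1 k (a : 'I_k -> R) :
  (\sum_i `|a i| `^ 1) `^ 1^-1 = \sum_i `|a i|.
Proof.
rewrite invr1 powRr1; last by apply: sumr_ge0 => i _; exact: powR_ge0.
by apply: eq_bigr => i _; rewrite powRr1.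
Qed.

Lemma max_ge0 k (a : 'I_k -> R) : 0 <= \big[Num.max/0]_(i < k) `|a i|.
Proof. exact: bigmax_ge_id. Qed.

Lemma max_ge k (a : 'I_k -> R) i : `|a i| <= \big[Num.max/0]_(i < k) `|a i|.
Proof. exact: (le_bigmax _ (fun i => `|a i|)). Qed.

Lemma holder_bound k (a d : 'I_k -> R) (p : \bar R) (eps : R) :
  (1 <= p)%E -> lpnorm p d <= eps ->
  `|\sum_i a i * d i| <= eps * lpnorm (hconj p) a.
Proof.
move=> hp hd; apply: le_trans (sum_abs_bound a d) _.
case: p hp hd => [r| |] //= hp hd.
- rewrite lee_fin in hp.
  have [r1|r1] := eqVneq r 1.
    subst r; rewrite sum_powR1 in hd.
    apply: le_trans (_ : (\big[Num.max/0]_(i < k) `|a i|) * \sum_i `|d i| <= _).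
      by rewrite mulr_sumr; apply: ler_sum => i _; rewrite ler_wpM2r // max_ge.
    by rewrite mulrC ler_wpM2r // max_ge0.
  have r1' : 1 < r by rewrite lt_neqAle eq_sym r1 hp.
  apply: le_trans (hoelder_fin a d (p := r) (q := r / (r - 1)) _ _ _) _.
  + lra.
  + apply: divr_gt0; lra.
  + rewrite invf_div; field; lra.
  + rewrite mulrC ler_wpM2r //; exact: powR_ge0.
- rewrite sum_powR1 mulrC mulr_suml.
  apply: ler_sum => i _; apply: ler_wpM2l => //.
  apply: le_trans hd; exact: max_ge.
Qed.
Lemma relu_pt (lr ur y c : R) (amb pl : bool) :
  amb = (lr < 0) && (0 < ur) -> pl = (0 <= lr) ->
  lr <= y -> y <= ur ->
  let d := if amb then ur / (ur - lr) else if pl then 1 else 0 in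
  c * Num.max y 0 <= (c * d) * y - (c * d) * (if amb && (0 < c * d) then lr else 0) /\
  (c * d) * y - (c * d) * (if amb && (c * d < 0) then lr else 0) <= c * Num.max y 0.
Proof.
move=> hamb hpl hl hu d.
have hmax : Num.max y 0 = y /\ 0 <= y \/ Num.max y 0 = 0 /\ y < 0.
  by case: (lerP 0 y) => hy; [left|right].
subst d; case: amb hamb => hamb /=.
- move/esym/andP: hamb => [l0 u0].
  set e := ur / (ur - lr).
  have he : e * (ur - lr) = ur by rewrite /e mulfVK // gt_eqF // subr_gt0 (lt_trans l0 u0).
  have e0 : 0 < e by rewrite /e divr_gt0 // subr_gt0 (lt_trans l0 u0).
  have e1 : e < 1 by nra.
  have hA : Num.max y 0 <= e * (y - lr).
    have : 0 <= (ur - y) * (1 - e) by apply: mulr_ge0; lra.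
    case: hmax => [[-> hy]|[-> hy]]; nra.
  have hB : e * y <= Num.max y 0 by case: hmax => [[-> hy]|[-> hy]]; nra.
  have [c0|c0|c0] := ltgtP c 0.
  + rewrite (_ : (0 < c * e) = false); last by apply/negbTE; rewrite -leNgt; nra.
    rewrite (_ : (c * e < 0) = true); last by apply/idP; nra.
    split; nra.
  + rewrite (_ : (0 < c * e) = true); last by apply/idP; nra.
    rewrite (_ : (c * e < 0) = false); last by apply/negbTE; rewrite -leNgt; nra.
    split; nra.
  + subst c; rewrite !mul0r; split; lra.
- case: pl hpl => hpl.
  + have hl0 : 0 <= lr by rewrite -hpl.
    have -> : Num.max y 0 = y by rewrite max_l // (le_trans hl0 hl).
    split; lra.
  + have hu0 : ur <= 0.
      have l0 : lr < 0 by rewrite ltNge -hpl.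
      by move: hamb; rewrite l0 /= leNgt => <-.
    have -> : Num.max y 0 = 0 by rewrite max_r // (le_trans hu hu0).
    split; lra.
Qed.
End H.

Section Main.
Variables (R : realType) (M : nat) (n : nat -> nat)
  (W : forall k : nat, 'M[R]_(n k.+1, n k))
  (b : forall k : nat, 'cV[R]_(n k.+1))
  (x0 : 'cV[R]_(n 0)) (p : \bar R) (eps : R)
  (l u : forall k : nat, 'cV[R]_(n k))
  (A : forall k : nat, 'M[R]_(n M.+1, n k)).
Hypothesis hb : forall k : nat, (k < M)%N -> forall r : 'I_(n k.+1),
     l k.+1 r 0 <= u k.+1 r 0 /\
     (forall x, ballp p x0 eps x ->
        l k.+1 r 0 <= (W k *m phi W b k x + b k) r 0 <= u k.+1 r 0).
Hypothesis hAM : A M = W M *m Dmat l u M.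
Hypothesis hA : forall k : nat, (k < M)%N -> A k = A k.+1 *m W k *m Dmat l u k.
Variable j : 'I_(n M.+1).

Lemma step k (P : 'M[R]_(n M.+1, n k.+1)) x : (k < M)%N ->
  P *m Dmat l u k.+1 = A k.+1 -> ballp p x0 eps x ->
  (P *m phi W b k.+1 x) j 0 <= ((A k.+1 *m W k) *m phi W b k x) j 0
     + (A k.+1 *m b k) j 0 - (A k.+1 *m Tmat l u A k.+1) j j /\
  ((A k.+1 *m W k) *m phi W b k x) j 0
     + (A k.+1 *m b k) j 0 - (A k.+1 *m Hmat l u A k.+1) j j
   <= (P *m phi W b k.+1 x) j 0.
Proof.
move=> kM hP hx.
set y := W k *m phi W b k x + b k.
have eA : ((A k.+1 *m W k) *m phi W b k x) j 0 + (A k.+1 *m b k) j 0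
    = (A k.+1 *m y) j 0 by rewrite /y mulmxDr mulmxA [RHS]mxE.
rewrite eA.
have hAjr : forall r, A k.+1 j r = P j r *
   (if in_Iamb l u r then u k.+1 r 0 / (u k.+1 r 0 - l k.+1 r 0)
    else if in_Iplus l r then 1 else 0).
  by move=> r; rewrite -hP /Dmat mul_mx_diag !mxE.
have ephi : phi W b k.+1 x = relu y by [].
rewrite ephi.
have hy : forall r, l k.+1 r 0 <= y r 0 <= u k.+1 r 0.
  by move=> r; have [_ H] := hb kM r; exact: H.
clearbody y.
split.
- rewrite !mxE -sumrB; apply: ler_sum => r _.
  rewrite !mxE !hAjr.
  have /andP[h1 h2] := hy r.
  exact: (relu_pt (P j r) (erefl (in_Iamb l u r)) (erefl (in_Iplus l r)) h1 h2).1.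
- rewrite !mxE -sumrB; apply: ler_sum => r _.
  rewrite !mxE !hAjr.
  have /andP[h1 h2] := hy r.
  exact: (relu_pt (P j r) (erefl (in_Iamb l u r)) (erefl (in_Iplus l r)) h1 h2).2.
Qed.

Definition SU k := \sum_(k <= i < M) ((A i.+1 *m b i) j 0 - (A i.+1 *m Tmat l u A i.+1) j j).
Definition SL k := \sum_(k <= i < M) ((A i.+1 *m b i) j 0 - (A i.+1 *m Hmat l u A i.+1) j j).

Definition Q k := exists P : 'M[R]_(n M.+1, n k), P *m Dmat l u k = A k /\
  forall x, ballp p x0 eps x ->
    netf W b M x j 0 <= (P *m phi W b k x) j 0 + b M j 0 + SU k /\
    (P *m phi W b k x) j 0 + b M j 0 + SL k <= netf W b M x j 0.

Lemma QM : Q M.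
Proof.
exists (W M); split; first by rewrite hAM.
move=> x hx; rewrite /SU /SL !big_geq // addr0 /netf.
have e : (W M *m phi W b M x + b M) j 0 = (W M *m phi W b M x) j 0 + b M j 0.
  by rewrite !mxE.
by rewrite e; split.
Qed.

Lemma Qstep k : (k < M)%N -> Q k.+1 -> Q k.
Proof.
move=> kM [P [hP H]].
exists (A k.+1 *m W k); split; first by rewrite -hA.
move=> x hx.
have [h1 h2] := H x hx.
have [s1 s2] := step kM hP hx.
rewrite /SU /SL !(big_ltn kM) -/(SU k.+1) -/(SL k.+1).
split; lra.
Qed.

Lemma Q0 : Q 0.
Proof.
have : forall d, (d <= M)%N -> Q (M - d)%N.
  elim=> [|d IH] hd; first by rewrite subn0; exact: QM.
  have e : (M - d = (M - d.+1).+1)%N by lia.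
  apply: Qstep; first lia.
  by rewrite -e; apply: IH; lia.
by move/(_ M (leqnn M)); rewrite subnn.
Qed.

End Main.

(* m = M.+1 layers; hidden layers 1..M; A k = A^{(k)} for k = 0..M. *)
Theorem corollary3p7 (R : realType) (M : nat) (n : nat -> nat)
  (W : forall k : nat, 'M[R]_(n k.+1, n k))
  (b : forall k : nat, 'cV[R]_(n k.+1))
  (x0 : 'cV[R]_(n 0)) (p : \bar R) (eps : R)
  (l u : forall k : nat, 'cV[R]_(n k))
  (A : forall k : nat, 'M[R]_(n M.+1, n k)) :
  (1 <= p)%E -> 0 < eps ->
  (* valid pre-ReLU bounds for hidden layers k+1 = 1..M *)
  (forall k : nat, (k < M)%N -> forall r : 'I_(n k.+1),
     l k.+1 r 0 <= u k.+1 r 0 /\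
     (forall x, ballp p x0 eps x ->
        l k.+1 r 0 <= (W k *m phi W b k x + b k) r 0 <= u k.+1 r 0)) ->
  (* A^{(m-1)} = W^{(m)} D^{(m-1)}, A^{(k-1)} = A^{(k)} W^{(k)} D^{(k-1)} *)
  A M = W M *m Dmat l u M ->
  (forall k : nat, (k < M)%N -> A k = A k.+1 *m W k *m Dmat l u k) ->
  forall j : 'I_(n M.+1),
    let q := hconj p in
    let muP := - \sum_(k < M) (A k.+1 *m Tmat l u A k.+1) j j in
    let muM := - \sum_(k < M) (A k.+1 *m Hmat l u A k.+1) j j in
    let nu := (A 0 *m x0) j 0 + b M j 0 + \sum_(k < M) (A k.+1 *m b k) j 0 in
    let gL := muM + nu - eps * lpnorm q (fun i => A 0 j i) in
    let gU := muP + nu + eps * lpnorm q (fun i => A 0 j i) in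
    forall x : 'cV[R]_(n 0), ballp p x0 eps x ->
      gL <= netf W b M x j 0 <= gU.
Proof.
move=> hp he hb hAM hA j q muP muM nu gL gU x hx.
have [P [hP H]] := Q0 hb hAM hA j.
have eP : P = A 0 by rewrite -hP /= mulmx1.
have [h1 h2] := H x hx.
rewrite eP /= in h1 h2.
have hh := holder_bound (fun i => A 0 j i) (d := fun i => x i 0 - x0 i 0) hp hx.
rewrite ler_norml in hh; case/andP: hh => hh1 hh2.
have ex : (A 0 *m x) j 0 = (A 0 *m x0) j 0 + \sum_i A 0 j i * (x i 0 - x0 i 0).
  by rewrite !mxE -big_split; apply: eq_bigr => i _ /=; ring.
rewrite ex /SU /SL big_mkord sumrB in h1.
rewrite ex /SU /SL big_mkord sumrB in h2.
rewrite /gL /gU /muP /muM /nu /q.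
apply/andP; split; lra.
Qed.
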